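(* Let $|\cdot|$ be a norm on $\mathbb{R}^d$ and let $\mathbf{X}=\{\mathbf{X}_j,j\in\mathbb{Z}\}$ be a strictly stationary, regularly varying $\mathbb{R}^d$-valued time series with tail process $\mathbf{Y}$. Let $u_n>0$ and positive integers $r_n$ satisfy $u_n\to\infty$, $r_n\to\infty$, $nw_n\to\infty$, $r_n/n\to0$, $r_nw_n\to0$, where $w_n=\mathbb{P}(|\mathbf{X}_0|>u_n)$. Let $\gamma\ge0$ and assume $\mathcal{S}^{(\gamma)}(r_n,u_n)$ holds. Let $H\in\mathcal{H}(\gamma)$. Then $$\lim_{L\to\infty}\limsup_{n\to\infty}\frac{\mathbb{E}\big[|H|(u_n^{-1}\mathbf{X}_{1,r_n})\mathbf{1}\{|H|(u_n^{-1}\mathbf{X}_{1,r_n})>L\}\big]}{r_nw_n}=0.$$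
   Context: Tail process: for all $i\le j$ the law of $x^{-1}(\mathbf{X}_i,\dots,\mathbf{X}_j)$ given $|\mathbf{X}_0|>x$ converges weakly to that of $(\mathbf{Y}_i,\dots,\mathbf{Y}_j)$ as $x\to\infty$. Notation: $\mathbf{x}_{i,j}=(\mathbf{x}_i,\dots,\mathbf{x}_j)$; the finite vector $u_n^{-1}\mathbf{X}_{1,r_n}$ is identified with the sequence having these entries at coordinates $1,\dots,r_n$ and $\mathbf{0}$ elsewhere; $\ell_0(\mathbb{R}^d)$ is the set of sequences tending to $0$ at $\pm\infty$. $\mathcal{S}^{(\gamma)}(r_n,u_n)$: for all $s,t>0$, $\lim_{\ell\to\infty}\limsup_{n\to\infty}\frac{1}{w_n}\sum_{i=\ell}^{r_n}i^\gamma\,\mathbb{P}(|\mathbf{X}_0|>u_ns,|\mathbf{X}_i|>u_nt)=0$. For $\mathbf{x}\in\ell_0(\mathbb{R}^d)$: $T_{\min}(\mathbf{x})=\inf\{j:|\mathbf{x}_j|>1\}$, $T_{\max}(\mathbf{x})=\sup\{j:|\mathbf{x}_j|>1\}$, $\mathrm{exc}(\mathbf{x})=\sum_j\mathbf{1}\{|\mathbf{x}_j|>1\}$, cluster length $\mathcal{K}(\mathbf{x})=T_{\max}(\mathbf{x})-T_{\min}(\mathbf{x})+1$ (and $0$ if $\mathrm{exc}(\mathbf{x})=0$). $\mathcal{H}(\gamma)$ is the class of functionals $H:\ell_0(\mathbb{R}^d)\to\mathbb{R}_+$ such that: (i) $H$ is continuous at almost every realization of $\mathbf{Y}$; (ii)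 $H(\mathbf{x})=0$ if $\mathrm{exc}(\mathbf{x})=0$; (iii) if $\mathrm{exc}(\mathbf{x})>0$ then $H(\mathbf{x})=H(\mathbf{x}_{T_{\min}(\mathbf{x}),T_{\max}(\mathbf{x})})$; (iv) there is $C_H>0$ with $H(\mathbf{x})\le C_H[\mathcal{K}(\mathbf{x})]^\gamma$ for all $\mathbf{x}$. *)

(* Defs.v *)
From HB Require Import structures.
From mathcomp Require Import all_boot all_order all_algebra.
From mathcomp Require Import all_classical all_reals all_analysis.
Set Implicit Arguments. Unset Strict Implicit. Unset Printing Implicit Defensive.
Import Order.TTheory GRing.Theory Num.Theory.
Import numFieldNormedType.Exports.
Local Open Scope classical_set_scope.
Local Open Scope ring_scope.

Section Defs.
Variables (R : realType) (d : nat).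

Definition is_norm (N : 'rV[R]_d -> R) : Prop :=
  [/\ forall x, N x = 0 -> x = 0,
      forall (a : R) x, N (a *: x) = `|a| * N x
    & forall x y, N (x + y) <= N x + N y].

Definition ell0 (N : 'rV[R]_d -> R) (x : int -> 'rV[R]_d) : Prop :=
  (fun n : nat => N (x n%:Z)) @ \oo --> (0 : R) /\
  (fun n : nat => N (x (- n%:Z))) @ \oo --> (0 : R).

Definition has_exc (N : 'rV[R]_d -> R) (x : int -> 'rV[R]_d) : Prop :=
  exists j, 1 < N (x j).

Definition Tmin (N : 'rV[R]_d -> R) (x : int -> 'rV[R]_d) : int :=
  xget 0 [set j | 1 < N (x j) /\ forall m, m < j -> N (x m) <= 1].

Definition Tmax (N : 'rV[R]_d -> R) (x : int -> 'rV[R]_d) : int :=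
  xget 0 [set j | 1 < N (x j) /\ forall m, j < m -> N (x m) <= 1].

Definition clen (N : 'rV[R]_d -> R) (x : int -> 'rV[R]_d) : nat :=
  if `[< has_exc N x >] then (`|Tmax N x - Tmin N x|%N).+1 else 0%N.

(* x_{i,j} identified with the sequence equal to x on [i,j] and 0 elsewhere *)
Definition window (x : int -> 'rV[R]_d) (i j : int) : int -> 'rV[R]_d :=
  fun m => if (i <= m) && (m <= j) then x m else 0.

(* continuity of H at x for the sup-norm (l^infty) topology on l_0 *)
Definition cont_at (N : 'rV[R]_d -> R) (H : (int -> 'rV[R]_d) -> R)
    (x : int -> 'rV[R]_d) : Prop :=
  forall e : R, 0 < e -> exists2 delta : R, 0 < delta &
    forall z, ell0 N z -> (forall j, N (z j - x j) <= delta) ->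
      `|H z - H x| < e.

Definition block (x : int -> 'rV[R]_d) (i : int) (k : nat) : 'M[R]_(k.+1, d) :=
  \matrix_(l < k.+1, c < d) x (i + (l : nat)%:Z) 0 c.

End Defs.

Section Prob.
Variables (R : realType) (d : nat) (N : 'rV[R]_d -> R).

Definition coord_measurable (dT : measure_display) (T : measurableType dT)
    (X : int -> T -> 'rV[R]_d) : Prop :=
  forall j (c : 'I_d), measurable_fun setT (fun w => X j w 0 c).

(* strict stationarity: all finite blocks have shift-invariant laws
   (laws on R^{(k+1) x d} compared through bounded continuous functions) *)
Definition stationary (dT : measure_display) (T : measurableType dT)
    (P : probability T R) (X : int -> T -> 'rV[R]_d) : Prop :=
  forall (i h : int) (k : nat) (f : 'M[R]_(k.+1, d) -> R),
    continuous f -> (exists M : R, forall z, `|f z| <= M) ->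
    (\int[P]_w (f (block (X ^~ w) i k))%:E =
     \int[P]_w (f (block (X ^~ w) (i + h) k))%:E)%E.

(* Y is the tail process of X: for every i <= j (here j = i + k) the law of
   x^{-1} (X_i,...,X_j) given |X_0| > x converges weakly to the law of
   (Y_i,...,Y_j) as x -> oo *)
Definition tail_process (dT : measure_display) (T : measurableType dT)
    (P : probability T R) (X : int -> T -> 'rV[R]_d)
    (dT' : measure_display) (T' : measurableType dT')
    (P' : probability T' R) (Y : int -> T' -> 'rV[R]_d) : Prop :=
  forall (i : int) (k : nat) (f : 'M[R]_(k.+1, d) -> R),
    continuous f -> (exists M : R, forall z, `|f z| <= M) ->
    (fun x : R =>
       ((\int[P]_(w in [set w | (x < N (X 0 w))%R]) (f (x^-1 *: block (X ^~ w) i k))%:E)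
        * ((fine (P [set w | (x < N (X 0 w))%R]))^-1)%:E)%E)
      @ +oo --> (\int[P']_w (f (block (Y ^~ w) i k))%:E)%E.

(* regularly varying stationary time series with tail process Y
   (Basrak--Segers characterization: |Y_0| is Pareto(alpha)) *)
Definition regvar_tail (dT : measure_display) (T : measurableType dT)
    (P : probability T R) (X : int -> T -> 'rV[R]_d)
    (dT' : measure_display) (T' : measurableType dT')
    (P' : probability T' R) (Y : int -> T' -> 'rV[R]_d) : Prop :=
  exists2 alpha : R, 0 < alpha &
    (forall y : R, 1 <= y -> P' [set w | y < N (Y 0 w)] = (y `^ (- alpha))%:E) /\
    tail_process P X P' Y.

Definition cond_S (dT : measure_display) (T : measurableType dT)
    (P : probability T R) (X : int -> T -> 'rV[R]_d)
    (gamma : R) (r : nat -> nat) (u : nat -> R) : Prop :=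
  let w n := fine (P [set w | u n < N (X 0 w)]) in
  forall s t : R, 0 < s -> 0 < t ->
    (fun l : nat => limn_esup (fun n : nat =>
       ((w n)^-1)%:E *
       \sum_(l <= i < (r n).+1)
          ((i%:R `^ gamma)%:E *
           P [set w | (u n * s < N (X 0 w))%R /\ (u n * t < N (X i%:Z w))%R])))%E
    @ \oo --> 0%E.

Definition Hclass (dT' : measure_display) (T' : measurableType dT')
    (P' : probability T' R) (Y : int -> T' -> 'rV[R]_d) (gamma : R)
    (H : (int -> 'rV[R]_d) -> R) : Prop :=
  [/\ (forall x, ell0 N x -> 0 <= H x),
      P'.-negligible [set w | ~ cont_at N H (Y ^~ w)],
      (forall x, ell0 N x -> ~ has_exc N x -> H x = 0),
      (forall x, ell0 N x -> has_exc N x ->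
          H x = H (window x (Tmin N x) (Tmax N x)))
    & exists2 C : R, 0 < C &
        forall x, ell0 N x -> H x <= C * (clen N x)%:R `^ gamma].

(* u_n^{-1} X_{1,r_n} as an element of l_0 *)
Definition scaled_block (x : int -> 'rV[R]_d) (un : R) (rn : nat) : int -> 'rV[R]_d :=
  fun m => if (1 <= m) && (m <= rn%:Z) then un^-1 *: x m else 0.

End Prob.

(* Main.v *)
Require Import Defs.
From HB Require Import structures.
From mathcomp Require Import all_boot all_order all_algebra.
From mathcomp Require Import all_classical all_reals all_analysis.
From mathcomp Require Import ring lra zify.
Import Order.TTheory GRing.Theory Num.Theory.
Import numFieldNormedType.Exports.
Local Open Scope classical_set_scope.
Local Open Scope ring_scope.
Set Implicit Arguments. Unset Strict Implicit.

Section NormFacts.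
Context (R : realType) (d : nat) (N : 'rV[R]_d -> R) (hN : is_norm N).

Lemma N0 : N 0 = 0.
Proof. case: hN => _ hZ _. by rewrite -(scale0r (0 : 'rV[R]_d)) hZ normr0 mul0r. Qed.

Lemma NN x : N (- x) = N x.
Proof. case: hN => _ hZ _. by rewrite -scaleN1r hZ normrN normr1 mul1r. Qed.

Lemma Nge0 x : 0 <= N x.
Proof.
case: hN => _ hZ hT. have := hT x (- x). rewrite subrr N0 NN.
move=> h. rewrite -(@ler_pM2l _ 2) // mulr0. lra.
Qed.

Lemma NB x y : `|N x - N y| <= N (x - y).
Proof.
case: hN => _ hZ hT. apply/ler_normlP; split.
- have := hT (y - x) x. rewrite subrK -opprB NN. lra.
- have := hT (x - y) y. rewrite subrK. lra.
Qed.

Definition Nsum (x : 'rV[R]_d) := \sum_(c < d) `|x 0 c| * N (delta_mx 0 c).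

Lemma Nle_sum x : N x <= Nsum x.
Proof.
case: hN => _ hZ hT. rewrite /Nsum {1}(row_sum_delta x).
elim/big_ind2: _ => //.
- by rewrite N0.
- move=> a b c e h1 h2. apply: le_trans (hT _ _) _. exact: lerD.
- by move=> i _; rewrite hZ.
Qed.

Lemma Nsum_le_mx x : Nsum x <= `|x| * \sum_(c < d) N (delta_mx 0 c).
Proof.
rewrite /Nsum mulr_sumr; apply: ler_sum => c _.
apply: ler_wpM2r; first exact: Nge0.
rewrite [leRHS]/Num.norm /= mx_normrE; apply/bigmax_geP; right => /=.
by exists (0, c).
Qed.

End NormFacts.

Lemma lip_cont (R : realType) (V : normedModType R) (f : V -> R) (k : R) : 0 <= k ->
  (forall x y, `|f x - f y| <= k * `|x - y|) -> continuous f.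
Proof.
move=> k0 h x; apply/cvgrPdist_le => e e0 /=.
have k1 : 0 < k + 1 by rewrite ltr_wpDl.
have ek : 0 < e / (k + 1) by rewrite divr_gt0.
have := @cvgr_dist_le _ _ _ (nbhs x) _ id x (@cvg_id _ (nbhs x)) _ ek.
move=> H; apply: filterS (H _) => y hy.
apply: le_trans (h x y) _.
have hk : k * `|x - y| <= (k+1) * `|x - y| by apply: ler_wpM2r => //; rewrite lerDl.
apply: le_trans hk _.
by rewrite -ler_pdivlMl // mulrC.
Qed.

Section Phi.
Context (R : realType).
Definition phi (t : R) : R :=
  if t <= 2^-1 then 0 else if 1 <= t then 1 else 2 * t - 1.

Lemma phi_lip (s t : R) : `|phi s - phi t| <= 2 * `|s - t|.
Proof.
wlog st : s t / t <= s.
  move=> W; have [/W//|/ltW ts] := leP t s.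
  by rewrite distrC (distrC s); apply: W.
rewrite (ger0_norm (_ : 0 <= s - t)) ?subr_ge0 //.
rewrite /phi; repeat (case: ifP => ?); apply/ler_normlP; split; lra.
Qed.

Lemma phi_ge0 (t : R) : 0 <= phi t.
Proof. rewrite /phi; repeat (case: ifP => ?); lra. Qed.
Lemma phi_le1 (t : R) : phi t <= 1.
Proof. rewrite /phi; repeat (case: ifP => ?); lra. Qed.
Lemma phi1 (t : R) : 1 < t -> phi t = 1.
Proof. rewrite /phi => h; repeat (case: ifP => ?); lra. Qed.
Lemma phi0 (t : R) : t <= 2^-1 -> phi t = 0.
Proof. rewrite /phi => h; repeat (case: ifP => ?); lra. Qed.
End Phi.

Section Meas.
Context (R : realType) (d : nat) (N : 'rV[R]_d -> R) (hN : is_norm N).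
Context (dT : measure_display) (T : measurableType dT) (x : T -> 'rV[R]_d).
Context (mx : forall c, measurable_fun setT (fun w => x w 0 c)).

Definition hq (q : 'rV[R]_d) w :=
  N q + \sum_(c < d) `|x w 0 c - q 0 c| * N (delta_mx 0 c).

Lemma hq_meas q : measurable_fun setT (hq q).
Proof.
apply: measurable_realfun.measurable_funD; first exact: measurable_cst.
apply: measurable_sum => c.
apply: measurable_realfun.measurable_funM; last exact: measurable_cst.
apply: measurableT_comp; first exact: measurable_realfun.normr_measurable.
apply: measurable_realfun.measurable_funB => //; exact: measurable_cst.
Qed.

Definition qs (n : nat) : 'rV[R]_d :=
  map_mx ratr (odflt 0 (unpickle n : option 'rV[rat]_d)).

Fixpoint mrun (n : nat) (w : T) : R :=
  match n with 0 => hq (qs 0) w | k.+1 => Num.min (mrun k w) (hq (qs k.+1) w) end.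

Lemma mrun_meas n : measurable_fun setT (mrun n).
Proof.
elim: n => [|n ih] /=; first exact: hq_meas.
exact: measurable_realfun.measurable_minr ih (hq_meas _).
Qed.

Lemma hq_ge q w : N (x w) <= hq q w.
Proof.
have hs : Nsum N (x w - q) = \sum_(c < d) `|x w 0 c - q 0 c| * N (delta_mx 0 c).
  by apply: eq_bigr => c _; rewrite !mxE.
case: hN => _ _ hT.
have := hT q (x w - q); rewrite addrC subrK => h.
rewrite /hq -hs; apply: le_trans h _; apply: lerD => //.
exact: Nle_sum.
Qed.

Lemma hq_le q w : hq q w <= N (x w) + 2 * Nsum N (x w - q).
Proof.
have hs : Nsum N (x w - q) = \sum_(c < d) `|x w 0 c - q 0 c| * N (delta_mx 0 c).
  by apply: eq_bigr => c _; rewrite !mxE.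
case: hN => _ _ hT.
have := hT (x w) (q - x w); rewrite addrC subrK => h.
have h2 : N (q - x w) <= Nsum N (x w - q).
  by rewrite -NN // opprB; exact: Nle_sum.
rewrite /hq -hs. lra.
Qed.

Lemma mrun_ge n w : N (x w) <= mrun n w.
Proof.
elim: n => [|n ih] /=; first exact: hq_ge.
by rewrite le_min ih hq_ge.
Qed.

Lemma mrun_le n k w : (k <= n)%N -> mrun n w <= hq (qs k) w.
Proof.
elim: n => [|n ih] /=.
  by rewrite leqn0 => /eqP ->.
rewrite leq_eqVlt => /orP [/eqP ->|]; first by rewrite ge_min lexx orbT.
by rewrite ltnS => /ih h; rewrite ge_min h.
Qed.

Lemma approx_rat w (e : R) : 0 < e ->
  exists qr : 'rV[rat]_d, Nsum N (x w - map_mx ratr qr) <= e.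
Proof.
move=> e0.
set S := \sum_(c < d) N (delta_mx 0 c) + 1.
have S0 : 0 < S.
  rewrite /S ltr_wpDl //; apply: sumr_ge0 => c _; exact: Nge0.
have eS : 0 < e / S by rewrite divr_gt0.
have : forall c : 'I_d, exists q : rat,
    ratr q \in `](x w 0 c - e / S), (x w 0 c + e / S)[.
  move=> c; apply: rat_in_itvoo.
  by rewrite ltrBlDr -addrA ltrDl addr_gt0.
move=> /choice [g hg]; exists (\row_c g c).
rewrite /Nsum.
apply: (@le_trans _ _ (\sum_(c < d) e / S * N (delta_mx 0 c))).
  apply: ler_sum => c _; apply: ler_wpM2r; first exact: Nge0.
  rewrite !mxE; move: (hg c); rewrite in_itv /= => /andP [h1 h2].
  apply/ler_normlP; split; lra.
rewrite -mulr_sumr.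
have hS : \sum_(c < d) N (delta_mx 0 c) <= S by rewrite /S lerDl.
by apply: le_trans (ler_wpM2l (ltW eS) hS) _; rewrite divfK ?gt_eqF.
Qed.

Lemma mrun_cvg w : mrun ^~ w @ \oo --> N (x w).
Proof.
apply/cvgrPdist_le => e e0.
have e2 : 0 < e / 2 by rewrite divr_gt0.
have [qr hqr] := approx_rat w e2.
exists (pickle qr) => // n /= hn.
have h1 := mrun_ge n w.
have h2 := mrun_le w hn.
have h3 := hq_le (qs (pickle qr)) w.
move: h2 h3; rewrite /qs pickleK /= => h2 h3.
rewrite ler_norml; apply/andP; split; lra.
Qed.

Lemma Nx_meas : measurable_fun setT (fun w => N (x w)).
Proof.
apply: (measurable_realfun.measurable_fun_cvg (h := fun n => mrun n)).
- move=> m; exact: mrun_meas.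
- move=> w _; exact: mrun_cvg.
Qed.

End Meas.

Section Seq.
Context (R : realType) (d : nat) (N : 'rV[R]_d -> R) (hN : is_norm N).
Context (x : int -> 'rV[R]_d) (u : R) (hu : 0 < u) (r : nat).

Local Notation sb := (scaled_block x u r).

Lemma Nsb m : N (sb m) = if (1 <= m) && (m <= r%:Z) then N (x m) / u else 0.
Proof.
rewrite /scaled_block; case: ifP => _; last exact: (N0 hN).
case: hN => _ hZ _; by rewrite hZ ger0_norm ?invr_ge0 ?ltW // mulrC.
Qed.

Lemma exc_sb m : 1 < N (sb m) -> [/\ 1 <= m, m <= r%:Z & u < N (x m)].
Proof.
rewrite Nsb; case: ifP => [/andP [h1 h2]|_]; last by rewrite ltr10.
by rewrite ltr_pdivlMr // mul1r.
Qed.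

Lemma exc_sbE (m : nat) : (1 <= m)%N -> (m <= r)%N -> u < N (x m) -> 1 < N (sb m).
Proof.
move=> h1 h2 h3; rewrite Nsb ifT; first by rewrite ltr_pdivlMr // mul1r.
by apply/andP; split; rewrite lez_nat.
Qed.

Lemma ell0_sb : ell0 N sb.
Proof.
split; apply: cvg_near_cst; exists r.+1 => // n /= hn.
  rewrite Nsb ifF //; apply/negbTE; rewrite negb_and; apply/orP; right.
  by rewrite -ltNge ltz_nat.
rewrite Nsb ifF //; apply/negbTE; rewrite negb_and; apply/orP; left.
rewrite -ltNge. have : (0 < n)%N by apply: leq_trans hn.
by case: n {hn} => // n _; rewrite NegzE ltrN2l ?lez_nat.
Qed.

Lemma exc_nat j : 1 < N (sb j) -> exists n : nat, j = n%:Z.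
Proof.
move=> /exc_sb [h1 _ _]; exists `|j|%N; rewrite gez0_abs //.
by apply: le_trans h1.
Qed.

Lemma Tmin_spec : has_exc N sb ->
  exists a : nat, [/\ Tmin N sb = a%:Z, (1 <= a)%N, (a <= r)%N, u < N (x a) &
     forall m : int, m < a%:Z -> N (sb m) <= 1].
Proof.
move=> [j hj].
have hset : exists n : nat, 1 < N (sb n%:Z).
  by have [n hn] := exc_nat hj; exists n; rewrite -hn.
have hex : exists t, [set t | 1 < N (sb t) /\ forall m, m < t -> N (sb m) <= 1] t.
  case: (ex_minnP hset) => a ha hmin.
  exists a%:Z; split => // m hm.
  rewrite leNgt; apply/negP => hm1.
  have [n hn] := exc_nat hm1; subst m.
  have := hmin n hm1; rewrite leqNgt; move: hm; rewrite ltz_nat => ->.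
  by [].
have := xgetPex 0 hex; rewrite -/(Tmin N sb) => -[h1 h2].
have [a ha] := exc_nat h1.
have [e1 e2 e3] := exc_sb h1.
exists a; split => //.
- by rewrite -lez_nat -ha.
- by rewrite -lez_nat -ha.
- by rewrite -ha.
- by rewrite -ha.
Qed.

Lemma Tmax_spec : has_exc N sb ->
  exists b : nat, [/\ Tmax N sb = b%:Z, (1 <= b)%N, (b <= r)%N, u < N (x b) &
     forall m : int, b%:Z < m -> N (sb m) <= 1].
Proof.
move=> [j hj].
have hset : exists n : nat, 1 < N (sb n%:Z).
  by have [n hn] := exc_nat hj; exists n; rewrite -hn.
have hub : forall n : nat, 1 < N (sb n%:Z) -> (n <= r)%N.
  by move=> n /exc_sb [_ h _]; rewrite -lez_nat.
have hex : exists t, [set t | 1 < N (sb t) /\ forall m, t < m -> N (sb m) <= 1] t.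
  case: (ex_maxnP hset hub) => b hb hmax.
  exists b%:Z; split => // m hm.
  rewrite leNgt; apply/negP => hm1.
  have [n hn] := exc_nat hm1; subst m.
  have := hmax n hm1; rewrite leqNgt; move: hm; rewrite ltz_nat => ->.
  by [].
have := xgetPex 0 hex; rewrite -/(Tmax N sb) => -[h1 h2].
have [a ha] := exc_nat h1.
have [e1 e2 e3] := exc_sb h1.
exists a; split => //.
- by rewrite -lez_nat -ha.
- by rewrite -lez_nat -ha.
- by rewrite -ha.
- by rewrite -ha.
Qed.

Lemma clen_spec : has_exc N sb ->
  exists a b : nat, [/\ (1 <= a)%N, (a <= b)%N, (b <= r)%N, u < N (x a) & u < N (x b)]
     /\ clen N sb = (b - a).+1.
Proof.
move=> he.
have [a [ea a1 ar ua ha]] := Tmin_spec he.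
have [b [eb b1 br ub hb]] := Tmax_spec he.
have ab : (a <= b)%N.
  rewrite leqNgt; apply/negP => ba.
  have := ha b%:Z; rewrite ltz_nat => /(_ ba).
  by rewrite leNgt (exc_sbE b1 br ub).
exists a, b; split; first by split.
by rewrite /clen (asboolT he) ea eb distnEl.
Qed.

End Seq.

Lemma int_mono (dT : measure_display) (T : measurableType dT) (R : realType)
  (mu : {measure set T -> \bar R}) (f g : T -> \bar R) :
  (forall w, (0 <= f w)%E) -> (forall w, (f w <= g w)%E) ->
  (\int[mu]_w f w <= \int[mu]_w g w)%E.
Proof.
move=> f0 fg.
have g0 : forall w, (0 <= g w)%E by move=> w; apply: le_trans (f0 w) (fg w).
rewrite (ge0_integralTE mu f0) (ge0_integralTE mu g0) /=.
apply: ereal_sup_le => _ [h hh <-]; exists h => //= w.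
exact: le_trans (hh w) (fg w).
Qed.

Lemma reindex_sum (R : realType) (F : nat -> R) (r i l : nat) :
  (forall k, 0 <= F k) ->
  \sum_(j < r) (if (i + l <= j)%N then F (j - i)%N else 0)
  <= \sum_(l <= k < r.+1) F k.
Proof.
move=> F0.
have R0 : 0 <= \sum_(l <= k < r.+1) F k by apply: sumr_ge0 => k _.
rewrite -(big_mkord xpredT (fun j => if (i + l <= j)%N then F (j - i)%N else 0)).
have [ir|ri] := leqP r i.
  rewrite big1_seq // => j; rewrite mem_index_iota => /andP [_ /andP [_ jr]].
  by rewrite ifF //; apply/negbTE; rewrite -ltnNge; apply: leq_trans jr (leq_trans ir (leq_addr _ _)).
rewrite (@big_cat_nat _ _ _ i 0 r _ _ (leq0n i) (ltnW ri)) /=.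
rewrite big1_seq ?add0r; last first.
  move=> j; rewrite mem_index_iota => /andP [_ /andP [_ ji]].
  by rewrite ifF //; apply/negbTE; rewrite -ltnNge; apply: leq_trans ji (leq_addr _ _).
rewrite -{1}(add0n i) big_addn.
apply: (@le_trans _ _ (\sum_(0 <= k < r.+1) (if (l <= k)%N then F k else 0))).
  rewrite (big_nat_widen _ _ _ _ _ (_ : r - i <= r.+1)%N); last first.
    by apply: leq_trans (leq_subr _ _) (leqnSn _).
  rewrite [leRHS](bigID (fun k => (k < r - i)%N)) /=.
  rewrite [X in X <= _](eq_bigr (fun k => if (l <= k)%N then F k else 0)); last first.
    by move=> k _; rewrite addnK (addnC i) leq_add2r.
  rewrite lerDl; apply: sumr_ge0 => k _; by case: ifP.
have [lr|rl] := leqP l r.+1.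
  rewrite (@big_cat_nat _ _ _ l 0 r.+1 _ _ (leq0n l) lr) /= big1_seq ?add0r; last first.
    by move=> k; rewrite mem_index_iota => /andP [_ /andP [_ kl]]; rewrite ifF // leqNgt kl.
  rewrite le_eqVlt; apply/orP; left; apply/eqP; apply: eq_big_nat => k /andP [lk _]; by rewrite lk.
by rewrite big1_seq // => k; rewrite mem_index_iota => /andP [_ /andP [_ kr]];
  rewrite ifF // leqNgt (leq_trans kr (ltnW rl)).
Qed.

Lemma mx_entry_le (R : realType) m n (M : 'M[R]_(m, n)) i j : `|M i j| <= `|M|.
Proof.
rewrite [leRHS]/Num.norm /= mx_normrE; apply/bigmax_geP; right => /=.
by exists (i, j).
Qed.

Section GCont.
Context (R : realType) (d : nat) (N : 'rV[R]_d -> R) (hN : is_norm N).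
Context (u : R) (hu : 0 < u).

Definition SN := \sum_(c < d) N (delta_mx 0 c).

Lemma SN_ge0 : 0 <= SN.
Proof. by apply: sumr_ge0 => c _; exact: Nge0. Qed.

Lemma rowN_lip m n (l : 'I_m) (z z' : 'M[R]_(m, n.+1)) :
  True -> True.
Proof. by []. Qed.

Lemma rowN_lip' m (l : 'I_m) (z z' : 'M[R]_(m, d)) :
  `|N (row l z) - N (row l z')| <= SN * `|z - z'|.
Proof.
apply: le_trans (NB hN _ _) _.
apply: le_trans (Nle_sum hN _) _.
rewrite /Nsum /SN mulr_suml; apply: ler_sum => c _.
rewrite mulrC; apply: ler_wpM2l; first exact: Nge0.
rewrite !mxE.
have := mx_entry_le (z - z') l c; rewrite !mxE; exact.
Qed.

Definition Gf k (z : 'M[R]_(k.+1, d)) : R :=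
  phi (N (row ord0 z) / u) * phi (N (row ord_max z) / u).

Lemma phiN_lip m (l : 'I_m) (z z' : 'M[R]_(m, d)) :
  `|phi (N (row l z) / u) - phi (N (row l z') / u)| <= 2 * (SN / u) * `|z - z'|.
Proof.
apply: le_trans (phi_lip _ _) _.
rewrite -mulrA ler_wpM2l //.
rewrite -mulrBl normrM (gtr0_norm (_ : 0 < u^-1)) ?invr_gt0 // mulrAC.
rewrite ler_pM2r ?invr_gt0 //; exact: rowN_lip'.
Qed.

Lemma Gf_cont k : continuous (@Gf k).
Proof.
apply: (@lip_cont _ _ _ (2 * (2 * (SN / u)))).
  by rewrite !mulr_ge0 ?invr_ge0 ?SN_ge0 ?(ltW hu).
move=> z z'; rewrite /Gf.
set a := phi _; set b := phi _; set a' := phi _; set b' := phi _.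
have ha : 0 <= a <= 1 by rewrite phi_ge0 phi_le1.
have hb : 0 <= b <= 1 by rewrite phi_ge0 phi_le1.
have ha' : 0 <= a' <= 1 by rewrite phi_ge0 phi_le1.
have hb' : 0 <= b' <= 1 by rewrite phi_ge0 phi_le1.
have h1 := phiN_lip ord0 z z'.
have h2 := phiN_lip ord_max z z'.
rewrite -/a -/a' in h1; rewrite -/b -/b' in h2.
have e : a * b - a' * b' = (a - a') * b + a' * (b - b') by ring.
rewrite e; apply: le_trans (ler_normD _ _) _.
have b0 : 0 <= b by case/andP: hb.
have a0 : 0 <= a' by case/andP: ha'.
rewrite !normrM (ger0_norm b0) (ger0_norm a0).
have t1 : `|a - a'| * b <= `|a - a'|.
  by rewrite ler_piMr //; case/andP: hb.
have t2 : a' * `|b - b'| <= `|b - b'|.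
  by rewrite ler_piMl //; case/andP: ha'.
set K := 2 * (SN / u) * `|z - z'|.
have -> : 2 * (2 * (SN / u)) * `|z - z'| = K + K by rewrite /K; ring.
by apply: lerD; [apply: le_trans t1 h1 | apply: le_trans t2 h2].
Qed.

Lemma Gf_bounded k : exists M : R, forall z, `|@Gf k z| <= M.
Proof.
exists 1 => z; rewrite /Gf normrM.
rewrite -[1]mulr1; apply: ler_pM => //.
- by rewrite ger0_norm ?phi_ge0 ?phi_le1.
- by rewrite ger0_norm ?phi_ge0 ?phi_le1.
Qed.

End GCont.

Lemma block_row (R : realType) (d : nat) (x : int -> 'rV[R]_d) i k (l : 'I_k.+1) :
  row l (block x i k) = x (i + (l : nat)%:Z).
Proof. by apply/rowP => c; rewrite !mxE. Qed.

Lemma phi_cont (R : realType) : continuous (@phi R).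
Proof.
apply: (@lip_cont _ _ _ 2) => // x y; exact: phi_lip.
Qed.

Section Prob.
Context (R : realType) (d : nat) (N : 'rV[R]_d -> R) (hN : is_norm N).
Context (dT : measure_display) (T : measurableType dT) (P : probability T R).
Context (X : int -> T -> 'rV[R]_d) (mX : coord_measurable X) (stat : stationary P X).
Context (u : R) (hu : 0 < u).

Definition gm (m : int) (w : T) : R := phi (N (X m w) / u).

Lemma NX_meas m : measurable_fun setT (fun w => N (X m w)).
Proof. exact: (Nx_meas hN (mX m)). Qed.

Lemma gm_meas m : measurable_fun setT (gm m).
Proof.
apply: (measurableT_comp (f := @phi R) (g := fun w => N (X m w) / u)).
  exact: measurable_realfun.continuous_measurable_fun (@phi_cont R).
apply: measurable_realfun.measurable_funM; first exact: NX_meas.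
exact: measurable_cst.
Qed.

Lemma gm_ge0 m w : 0 <= gm m w. Proof. exact: phi_ge0. Qed.
Lemma gm_le1 m w : gm m w <= 1. Proof. exact: phi_le1. Qed.

Lemma stat_shift (i j : nat) : (i <= j)%N ->
  (\int[P]_w (gm i%:Z w * gm j%:Z w)%:E =
   \int[P]_w (gm 0 w * gm (j - i)%N%:Z w)%:E)%E.
Proof.
move=> ij.
have := stat i%:Z (- i%:Z) (@Gf_cont R d N hN u hu (j - i)) (@Gf_bounded R d N u (j - i)).
move=> hst.
transitivity (\int[P]_w (@Gf R d N u (j - i) (block (X ^~ w) i%:Z (j - i)))%:E)%E.
  apply: eq_integral => w _; congr EFin; rewrite /Gf !block_row /=.
  by rewrite addr0 -PoszD subnKC.
rewrite hst; apply: eq_integral => w _; congr EFin; rewrite /Gf !block_row /=.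
by rewrite subrr !add0r.
Qed.

Definition Bk (k : nat) := [set w | u * 2^-1 < N (X 0 w) /\ u * 2^-1 < N (X k%:Z w)].

Lemma pre_meas (m : int) (a : R) : measurable [set w | a < N (X m w)].
Proof.
have := NX_meas m measurableT (measurable_itv `]a, +oo[); rewrite setTI.
congr measurable; apply/seteqP; split => w /=; by rewrite in_itv /= andbT.
Qed.

Lemma Bk_meas k : measurable (Bk k).
Proof.
rewrite (_ : Bk k = [set w | u * 2^-1 < N (X 0 w)] `&` [set w | u * 2^-1 < N (X k%:Z w)]) //.
exact: measurableI (pre_meas _ _) (pre_meas _ _).
Qed.

Lemma int_g_le k :
  (\int[P]_w (gm 0 w * gm k%:Z w)%:E <= P (Bk k))%E.
Proof.
rewrite -(setIT (Bk k)) -(integral_indic P measurableT (Bk_meas k)).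
apply: int_mono => w; first by rewrite lee_fin mulr_ge0 ?gm_ge0.
rewrite lee_fin indicE; case: (boolP (w \in Bk k)) => hw /=.
  by rewrite -[1]mulr1 ler_pM ?gm_ge0 ?gm_le1.
have hw' : ~ Bk k w by move=> h; move/negP: hw; apply; rewrite inE.
have [h0|h0] := leP (N (X 0 w)) (u * 2^-1).
  rewrite /gm phi0 ?mul0r // ler_pdivrMr //; lra.
have [hk|hk] := leP (N (X k%:Z w)) (u * 2^-1).
  rewrite /gm [X in _ * X]phi0 ?mulr0 // ler_pdivrMr //; lra.
by exfalso; apply: hw'.
Qed.

Definition pB k := fine (P (Bk k)).

Lemma PB_fin k : P (Bk k) = (pB k)%:E.
Proof.
rewrite /pB fineK // ge0_fin_numE ?measure_ge0 //.
apply: le_lt_trans (probability_le1 P (Bk_meas k)) _; exact: ltey.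
Qed.

Lemma pB_ge0 k : 0 <= pB k.
Proof. by rewrite /pB fine_ge0 // measure_ge0. Qed.

Lemma int_gg_le (i j : nat) : (i <= j)%N ->
  (\int[P]_w (gm i%:Z w * gm j%:Z w)%:E <= (pB (j - i)%N)%:E)%E.
Proof.
move=> ij; rewrite stat_shift // -PB_fin; exact: int_g_le.
Qed.

Context (H : (int -> 'rV[R]_d) -> R) (gamma C : R) (g0 : 0 <= gamma) (C0 : 0 < C).
Context (Hge0 : forall x, ell0 N x -> 0 <= H x).
Context (Hle : forall x, ell0 N x -> H x <= C * (clen N x)%:R `^ gamma).

Definition term (l i j : nat) (w : T) : R :=
  if (i + l <= j)%N then C * (j - i).+1%:R `^ gamma * (gm i.+1%:Z w * gm j.+1%:Z w) else 0.

Lemma term_ge0 l i j w : 0 <= term l i j w.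
Proof.
rewrite /term; case: ifP => _ //.
by rewrite !mulr_ge0 ?gm_ge0 ?powR_ge0 ?(ltW C0).
Qed.

Lemma pw_bound (r : nat) (L : R) (l : nat) w : (1 <= l)%N ->
  C * l%:R `^ gamma <= L ->
  `|H (scaled_block (X ^~ w) u r)| * ((L < `|H (scaled_block (X ^~ w) u r)|)%R)%:R <=
  \sum_(i < r) \sum_(j < r) term l i j w.
Proof.
move=> l1 hL.
set sb := scaled_block (X ^~ w) u r.
have e0 : ell0 N sb := ell0_sb hN (X ^~ w) hu r.
have h0 := Hge0 e0.
have S0 : 0 <= \sum_(i < r) \sum_(j < r) term l i j w.
  by apply: sumr_ge0 => i _; apply: sumr_ge0 => j _; exact: term_ge0.
rewrite ger0_norm //.
case: (ltP L (H sb)) => hl; last by rewrite mulr0.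
rewrite mulr1.
have hc := Hle e0.
have cl : (l < clen N sb)%N.
  rewrite ltnNge; apply/negP => cle.
  have hp : (clen N sb)%:R `^ gamma <= l%:R `^ gamma.
    by apply: ge0_ler_powR => //; rewrite ?nnegrE ?ler_nat.
  have := ler_wpM2l (ltW C0) hp. lra.
have he : has_exc N sb.
  move: cl; rewrite /clen; case: asboolP => // _; by rewrite ltn0.
have [a [b [[a1 ab br ua ub] ecl]]] := clen_spec hN hu he.
have ia : (a.-1 < r)%N by lia.
have jb : (b.-1 < r)%N by lia.
apply: le_trans hc _.
rewrite (bigD1 (Ordinal ia)) //= -[leLHS]addr0; apply: lerD; last first.
  by apply: sumr_ge0 => i _; apply: sumr_ge0 => j _; exact: term_ge0.
rewrite (bigD1 (Ordinal jb)) //= -[leLHS]addr0; apply: lerD; last first.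
  by apply: sumr_ge0 => j _; exact: term_ge0.
rewrite /term /= ifT; last by rewrite ecl in cl; lia.
have -> : (b.-1 - a.-1).+1 = clen N sb by rewrite ecl; lia.
rewrite !prednK //; last by apply: leq_trans a1 ab.
rewrite /gm !phi1 ?mulr1 //.
- by rewrite ltr_pdivlMr // mul1r.
- by rewrite ltr_pdivlMr // mul1r.
Qed.

Lemma term_meas l i j : measurable_fun setT (term l i j).
Proof.
have [hc|hc] := boolP (i + l <= j)%N; rewrite /term ?hc ?(negbTE hc); last exact: measurable_cst.
apply: measurable_realfun.measurable_funM; first exact: measurable_cst.
by apply: measurable_realfun.measurable_funM; apply: gm_meas.
Qed.

Lemma int_term l i j :
  (\int[P]_w (term l i j w)%:E <=
   (if (i + l <= j)%N then C * (j - i).+1%:R `^ gamma * pB (j - i)%N else 0)%:E)%E.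
Proof.
have [hc|hc] := boolP (i + l <= j)%N; rewrite /term ?hc ?(negbTE hc); last by rewrite integral0_eq.
under eq_integral do rewrite EFinM.
rewrite ge0_integralZl_EFin //; last 3 first.
- by move=> w _; rewrite lee_fin mulr_ge0 ?gm_ge0.
- apply/measurable_realfun.measurable_EFinP.
  by apply: measurable_realfun.measurable_funM; apply: gm_meas.
- by rewrite mulr_ge0 ?powR_ge0 ?(ltW C0).
rewrite [X in (_ <= X)%E]EFinM; apply: lee_wpmul2l.
  by rewrite lee_fin mulr_ge0 ?powR_ge0 ?(ltW C0).
by have := @int_gg_le i.+1 j.+1; rewrite ltnS subSS; apply; lia.
Qed.

Lemma inner_bound (r i l : nat) : (1 <= l)%N ->
  \sum_(j < r) (if (i + l <= j)%N then C * (j - i).+1%:R `^ gamma * pB (j - i)%N else 0)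
  <= C * (2 `^ gamma * \sum_(l <= k < r.+1) k%:R `^ gamma * pB k).
Proof.
move=> l1.
rewrite (eq_bigr (fun j : 'I_r => C * (if (i + l <= j)%N then
   (j - i).+1%:R `^ gamma * pB (j - i)%N else 0))); last first.
  by move=> j _; case: ifP; rewrite ?mulr0 ?mulrA.
rewrite -mulr_sumr; apply: ler_wpM2l; first exact: ltW.
apply: le_trans (@reindex_sum R (fun k => k.+1%:R `^ gamma * pB k) r i l _) _.
  by move=> k; rewrite mulr_ge0 ?powR_ge0 ?pB_ge0.
rewrite mulr_sumr big_nat_cond [X in _ <= X]big_nat_cond.
apply: ler_sum => k /andP [/andP [lk _] _].
rewrite mulrA -powRM ?ler0n //; apply: ler_wpM2r; first exact: pB_ge0.
apply: ge0_ler_powR => //; rewrite ?nnegrE ?mulr_ge0 ?ler0n //.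
rewrite -natrM ler_nat; lia.
Qed.

Lemma int_bound (r : nat) (L : R) (l : nat) : (1 <= l)%N ->
  C * l%:R `^ gamma <= L ->
  (\int[P]_w ((`|H (scaled_block (X ^~ w) u r)| *
      ((L < `|H (scaled_block (X ^~ w) u r)|)%R)%:R)%:E) <=
   (C * 2 `^ gamma * (r%:R * \sum_(l <= k < r.+1) k%:R `^ gamma * pB k))%:E)%E.
Proof.
move=> l1 hL.
apply: (le_trans (@int_mono _ _ _ P _ (fun w => (\sum_(i < r) \sum_(j < r) term l i j w)%:E) _ _)).
- by move=> w; rewrite lee_fin mulr_ge0 ?ler0n.
- by move=> w; rewrite lee_fin; apply: pw_bound.
rewrite (eq_integral (fun w => \sum_(p : 'I_r * 'I_r) (term l p.1 p.2 w)%:E)); last first.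
  by move=> w _; rewrite pair_bigA /= sumEFin.
rewrite ge0_integral_sum //; last 2 first.
- by move=> p; apply/measurable_realfun.measurable_EFinP; exact: term_meas.
- by move=> p w _; rewrite lee_fin term_ge0.
have H1 : (\sum_(p : 'I_r * 'I_r) \int[P]_w (term l p.1 p.2 w)%:E <=
  \sum_(p : 'I_r * 'I_r) (if (p.1 + l <= p.2)%N then
     C * (p.2 - p.1).+1%:R `^ gamma * pB (p.2 - p.1)%N else 0)%:E)%E.
  by apply: lee_sum => p _; exact: int_term.
apply: (le_trans H1).
rewrite sumEFin lee_fin -(pair_bigA _ (fun i j : 'I_r =>
  if (i + l <= j)%N then C * (j - i).+1%:R `^ gamma * pB (j - i)%N else 0)) /=.
have H2 : \sum_(i < r) \sum_(j < r) (if (i + l <= j)%N then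
     C * (j - i).+1%:R `^ gamma * pB (j - i)%N else 0) <=
  \sum_(i < r) C * (2 `^ gamma * \sum_(l <= k < r.+1) k%:R `^ gamma * pB k).
  by apply: ler_sum => i _; exact: inner_bound.
apply: (le_trans H2).
rewrite sumr_const card_ord -mulr_natl.
by rewrite le_eqVlt; apply/orP; left; apply/eqP; ring.
Qed.

End Prob.

Section LS.
Context (R : realType).
Local Open Scope ereal_scope.
Implicit Types (v : (\bar R)^nat).

Lemma limn_esupE v : limn_esup v = ereal_inf (range (esups v)).
Proof. by rewrite limn_esup_lim; apply: cvg_lim => //; exact: cvg_esups_inf. Qed.

Lemma limn_esup_le_esups v m : limn_esup v <= esups v m.
Proof. by rewrite limn_esupE; apply: ereal_inf_lbound; exists m. Qed.

Lemma limn_esup_lt v e : limn_esup v < e -> exists m, esups v m < e.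
Proof. by rewrite limn_esupE => /ereal_inf_lt [_ [m _ <-] h]; exists m. Qed.

Lemma limn_esup_ge0 v : (forall n, 0 <= v n) -> 0 <= limn_esup v.
Proof.
move=> v0; rewrite limn_esupE; apply: le_ereal_inf_tmp => _ [m _ <-].
apply: le_trans (v0 m) _; apply: ereal_sup_ubound; exists m => //=.
Qed.

Lemma esups_le_scale v v' (K : R) : (0 <= K)%R ->
  (forall n, v n <= K%:E * v' n) -> forall m, esups v m <= K%:E * esups v' m.
Proof.
move=> K0 h m; apply: ge_ereal_sup => _ [n /= mn <-].
apply: le_trans (h n) _; apply: lee_wpmul2l; first by rewrite lee_fin.
by apply: ereal_sup_ubound; exists n.
Qed.

End LS.

Unset Implicit Arguments.

Theorem lemma3p7 (R : realType) (d : nat) (N : 'rV[R]_d -> R)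
    (dT : measure_display) (T : measurableType dT) (P : probability T R)
    (X : int -> T -> 'rV[R]_d)
    (dT' : measure_display) (T' : measurableType dT') (P' : probability T' R)
    (Y : int -> T' -> 'rV[R]_d)
    (u : nat -> R) (r : nat -> nat) (gamma : R)
    (H : (int -> 'rV[R]_d) -> R) :
  is_norm N ->
  coord_measurable X -> coord_measurable Y ->
  stationary P X ->
  regvar_tail N P X P' Y ->
  (forall n, 0 < u n) -> (forall n, (0 < r n)%N) ->
  u @ \oo --> +oo ->
  r @ \oo --> \oo ->
  let w n := fine (P [set v | u n < N (X 0 v)]) in
  (fun n => n%:R * w n) @ \oo --> +oo ->
  (fun n => (r n)%:R / n%:R) @ \oo --> (0 : R) ->
  (fun n => (r n)%:R * w n) @ \oo --> (0 : R) ->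
  0 <= gamma ->
  cond_S N P X gamma r u ->
  Hclass N P' Y gamma H ->
  (fun L : R => limn_esup (fun n : nat =>
      ((\int[P]_v ((`|H (scaled_block (X ^~ v) (u n) (r n))|
                    * ((L < `|H (scaled_block (X ^~ v) (u n) (r n))|)%R)%:R)%:E))
       * (((r n)%:R * w n)^-1)%:E)%E))
    @ +oo --> 0%E.
Proof.
move=> hN mX _ stat _ upos rpos _ _ w _ _ _ g0 condS Hcl.
case: Hcl => Hge0 _ _ _ [C C0 Hle].
pose K := C * 2 `^ gamma.
have K0 : 0 < K by rewrite /K mulr_gt0 // powR_gt0.
pose c := fun (l n : nat) => (((w n)^-1)%:E *
   \sum_(l <= i < (r n).+1) ((i%:R `^ gamma)%:E *
      P [set v | (u n * 2^-1 < N (X 0 v))%R /\ (u n * 2^-1 < N (X i%:Z v))%R]))%E.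
have hc : (fun l => limn_esup (c l)) @ \oo --> 0%E.
  have h2 : (0 : R) < 2^-1 by rewrite invr_gt0.
  exact: (condS _ _ h2 h2).
pose ratio := fun (L : R) (n : nat) =>
      ((\int[P]_v ((`|H (scaled_block (X ^~ v) (u n) (r n))|
                    * ((L < `|H (scaled_block (X ^~ v) (u n) (r n))|)%R)%:R)%:E))
       * (((r n)%:R * w n)^-1)%:E)%E.
have w0 : forall n, 0 <= w n by move=> n; rewrite /w fine_ge0 // measure_ge0.
have key : forall (l : nat) (L : R), (1 <= l)%N -> C * l%:R `^ gamma <= L ->
    forall n, (ratio L n <= K%:E * c l n)%E.
  move=> l L l1 hL n.
  have hi := int_bound hN mX stat (upos n) g0 C0 Hge0 Hle (r n) l1 hL.
  rewrite /ratio.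
  apply: le_trans (lee_wpmul2r _ hi) _.
    by rewrite lee_fin invr_ge0 mulr_ge0.
  have -> : c l n = ((w n)^-1 * \sum_(l <= k < (r n).+1) k%:R `^ gamma *
                         pB N P X (u n) k)%:E.
    rewrite /c EFinM; congr (_ * _)%E; rewrite -sumEFin.
    apply: eq_bigr => k _; rewrite EFinM; congr (_ * _)%E.
    exact: PB_fin.
  rewrite -!EFinM lee_fin.
  have rr : (r n)%:R * ((r n)%:R)^-1 = 1 :> R.
    by rewrite mulfV // pnatr_eq0 -lt0n.
  rewrite invfM.
  set S := \sum_(_ <= _ < _) _.
  have -> : C * 2 `^ gamma * ((r n)%:R * S) * (((r n)%:R)^-1 * (w n)^-1) =
            K * ((w n)^-1 * S) * ((r n)%:R * ((r n)%:R)^-1) by rewrite /K; ring.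
  by rewrite rr mulr1.
have f0 : forall L, (0 <= limn_esup (ratio L))%E.
  move=> L; apply: limn_esup_ge0 => n; apply: mule_ge0.
    by apply: integral_ge0 => v _; rewrite lee_fin mulr_ge0.
  by rewrite lee_fin invr_ge0 mulr_ge0.
have fle : forall (l : nat) (L : R), (1 <= l)%N -> C * l%:R `^ gamma <= L ->
    forall m, (limn_esup (ratio L) <= K%:E * esups (c l) m)%E.
  move=> l L l1 hL m; apply: le_trans (limn_esup_le_esups _ m) _.
  exact: esups_le_scale (ltW K0) (key l L l1 hL) m.
have small : forall e : R, 0 < e ->
    exists l m, (1 <= l)%N /\ (esups (c l) m < e%:E)%E.
  move=> e e0.
  have /fine_cvgP [hfin hfc] := hc.
  have hd := cvgr_dist_lt _ _ hfc _ e0.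
  have : \forall l \near \oo, (limn_esup (c l) < e%:E)%E.
    near=> l.
    have hf : limn_esup (c l) \is a fin_num by near: l.
    have hl : `|0 - fine (limn_esup (c l))| < e by near: l; apply: (hd _).
    move: hl; rewrite sub0r normrN => hl.
    rewrite -(fineK hf) lte_fin; apply: le_lt_trans hl; exact: ler_norm.
  case=> N0 _ hN0.
  have /limn_esup_lt [m hm] := hN0 (maxn 1 N0) (leq_maxr _ _).
  by exists (maxn 1 N0), m; split => //; rewrite leq_maxl.
change ((fun L : R => limn_esup (ratio L)) @ +oo --> 0%E).
apply/fine_cvgP; split.
  have [l [m [l1 hm]]] := small 1 ltr01.
  near=> L.
  have hL : C * l%:R `^ gamma <= L.
    by near: L; apply: nbhs_pinfty_ge; exact: num_real.
  have h := fle l L l1 hL m.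
  rewrite ge0_fin_numE //; apply: (le_lt_trans h).
  have h2 : (K%:E * esups (c l) m <= K%:E * 1%:E)%E.
    by apply: lee_wpmul2l; [rewrite lee_fin ltW | exact: ltW].
  apply: (le_lt_trans h2); by rewrite -EFinM ltey.
apply/cvgrPdist_le => e e0.
have eK : 0 < e / K by rewrite divr_gt0.
have [l [m [l1 hm]]] := small _ eK.
near=> L.
have hL : C * l%:R `^ gamma <= L.
  by near: L; apply: nbhs_pinfty_ge; exact: num_real.
have h1 : (limn_esup (ratio L) <= e%:E)%E.
  apply: le_trans (fle l L l1 hL m) _.
  apply: le_trans (_ : _ <= K%:E * (e / K)%:E)%E _.
    by apply: lee_wpmul2l; [rewrite lee_fin ltW | exact: ltW].
  by rewrite -EFinM lee_fin mulrC divfK // gt_eqF.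
have hf : limn_esup (ratio L) \is a fin_num.
  by rewrite ge0_fin_numE //; apply: le_lt_trans h1 _; exact: ltey.
rewrite /= sub0r normrN ger0_norm ?fine_ge0 //.
by rewrite -lee_fin (fineK hf).
Unshelve. all: by end_near.
Qed.
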